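(* Let $G$ be a directed acyclic graph with $n$ vertices labelled $v_1,\ldots,v_n$ in a topological order, with real edge lengths, let $\varepsilon>0$, $q=(1+\varepsilon)^{1/(n+1)}$, and let $\tau,\tau'$ be the functions defined in the context. Given a real $L$, let $k$ be an integer such that $\tau'(v_n,q^k)\le L<\tau'(v_n,q^{k+1})$ and let $a$ be a non-negative integer such that $\tau(v_n,a)\le L<\tau(v_n,a+1)$. Then $$(1+\varepsilon)^{-1}\le \frac{a}{q^k}\le 1+\varepsilon.$$
   Context: For a vertex $v_i$ and a real number $x\ge 0$, $\tau(v_i,x)$ is the infimum of all real $L'$ such that there are at least $x$ directed paths from $v_1$ to $v_i$ of length (sum of edge lengths) at most $L'$, with $\inf\emptyset=\infty$; the trivial path from $v_1$ to itself has length $0$. For a vertex $v_i$ with $i>1$, let $p_1,\ldots,p_d$ be the tails of the edges entering $v_i$ and $l_1,\ldots,l_d$ the lengths of these edges. The function $\tau'$ is defined on pairs $(v_i,y)$ with $y=0$ or $y=q^j$ for an integer $j$ by: $\tau'(v_1,0)=-\infty$, $\tau'(v_1,y)=0$ for $0<y\le 1$, $\tau'(v_1,y)=\infty$ for $y>1$, and for $i>1$, $$\tau'(v_i,q^j)=\min_{\substack{\alpha_1,\ldots,\alpha_d\ge 0\\ \sum_s\alpha_s=1}}\ \max_{s}\Big(\tau'\big(p_s,q^{\lfloor j+\log_q\alpha_s\rfloor}\big)+l_s\Big),$$ where $q^{\lfloor j+\log_q\alpha_s\rfloor}$ is interpreted as $0$ when $\alpha_s=0$, and $\tau'(v_i,0)=-\infty$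 for every $i$. *)

(* Defs.v *)
From HB Require Import structures.
From mathcomp Require Import all_boot all_order all_algebra.
From mathcomp Require Import all_classical all_reals all_analysis.
Set Implicit Arguments. Unset Strict Implicit. Unset Printing Implicit Defensive.
Import Order.TTheory GRing.Theory Num.Theory.
Local Open Scope ring_scope.

(* Vertices v_1,...,v_n are the ordinals 0,...,n-1 of 'I_n (v_i = i-1).
   E u v : there is an edge u -> v;  len u v : its (real) length. *)

Section Paths.
Variables (R : realType) (n : nat) (E : rel 'I_n) (len : 'I_n -> 'I_n -> R).

Definition plen (x : 'I_n) (s : seq 'I_n) : R :=
  \sum_(e <- zip (x :: s) s) len e.1 e.2.

(* number of directed paths from v1 to v of length at most L'.
   (Paths with k edges are tuples of k vertices after v1; in a graph whose
   edges go from smaller to larger labels, every path has fewer than n edges.) *)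
Definition npaths (v1 v : 'I_n) (L' : R) : nat :=
  \sum_(k < n) #|[set t : k.-tuple 'I_n |
      [&& path E v1 t, last v1 t == v & (plen v1 t <= L')%R]]|.

Definition tau (v1 v : 'I_n) (x : R) : \bar R :=
  ereal_inf [set (L' %:E)%E | L' in [set L' : R | (x <= (npaths v1 v L')%:R)%R]].

Variable q : R.

Definition logq (x : R) : R := ln x / ln q.

(* one step of the recursion for tau', given the table T for earlier vertices;
   the argument y : option int encodes y = 0 (None) or y = q^j (Some j). *)
Definition tau'_step (T : 'I_n -> option int -> \bar R) (i : 'I_n)
    (y : option int) : \bar R :=
  match y with
  | None => -oo%E
  | Some j =>
    if (nat_of_ord i == 0)%N then (if (j <= 0)%R then 0%E else +oo%E)
    else ereal_inf [set z : \bar R | exists alpha : 'I_n -> R,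
        [/\ (forall p, E p i -> (0 <= alpha p)%R),
            (\sum_(p | E p i) alpha p = 1)%R &
            z = \big[Order.max/-oo%E]_(p | E p i)
                  ((if (alpha p == 0)%R then T p None
                    else T p (Some (Num.floor (j%:~R + logq (alpha p)))))
                   + (len p i)%:E)%E]]
  end.

Fixpoint tau'_tab (m : nat) : 'I_n -> option int -> \bar R :=
  match m with
  | 0 => fun _ _ => -oo%E
  | m'.+1 => fun i y =>
      if (i < m')%N then tau'_tab m' i y else tau'_step (tau'_tab m') i y
  end.

Definition tau' (i : 'I_n) (y : option int) : \bar R := tau'_tab (i.+1) i y.

End Paths.

Lemma pred_ltn (n : nat) (hn : (0 < n)%N) : (n.-1 < n)%N.
Proof. by rewrite ltn_predL. Qed.

Definition vfirst (n : nat) (hn : (0 < n)%N) : 'I_n := Ordinal hn.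
Definition vlast (n : nat) (hn : (0 < n)%N) : 'I_n := Ordinal (pred_ltn hn).

(* Main.v *)
Require Import Defs.
From HB Require Import structures.
From mathcomp Require Import all_boot all_order all_algebra.
From mathcomp Require Import all_classical all_reals all_analysis.
From mathcomp Require Import ring lra.
Import Order.TTheory GRing.Theory Num.Theory.
Local Open Scope ring_scope.
Set Implicit Arguments. Unset Strict Implicit. Unset Printing Implicit Defensive.

Lemma card_sum (T : finType) (P : pred T) :
  #|[set t | P t]| = (\sum_t (P t : nat))%N.
Proof.
rewrite -sum1_card big_mkcond /=; apply: eq_bigr => t _; rewrite inE.
by case: (P t).
Qed.

Lemma sum_tuple_rcons (T : finType) k (F : k.+1.-tuple T -> nat) :
  (\sum_t F t = \sum_(t : k.-tuple T) \sum_(x : T) F (rcons_tuple t x))%N.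
Proof.
rewrite pair_bigA /=.
pose h := fun p : k.-tuple T * T => rcons_tuple p.1 p.2.
have hb : bijective h.
  apply: inj_card_bij.
    move=> [t x] [t' x'] /(congr1 val) /= /rcons_inj [] /val_inj -> ->.
    by [].
  by rewrite card_prod !card_tuple expnS mulnC.
by rewrite (reindex h) //; exact: onW_bij.
Qed.

Section Comb.
Variables (R : realType) (n : nat) (E : rel 'I_n) (len : 'I_n -> 'I_n -> R).
Hypothesis htop : forall u v : 'I_n, E u v -> (u < v)%N.
Variable v1 : 'I_n.
Hypothesis hv1 : nat_of_ord v1 = 0%N.

Lemma path_last_ge (x : 'I_n) (t : seq 'I_n) :
  path E x t -> (x + size t <= last x t)%N.
Proof.
elim: t x => [|y t IH] x /=; first by rewrite addn0.
move=> /andP[/htop hxy /IH h]; rewrite addnS.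
by apply: leq_trans h; rewrite ltn_add2r.
Qed.

Definition G (v : 'I_n) (L : R) (k : nat) : nat :=
  #|[set t : k.-tuple 'I_n |
      [&& path E v1 t, last v1 t == v & (plen len v1 t <= L)%R]]|.

Lemma npathsE (v : 'I_n) (L : R) : npaths E len v1 v L = (\sum_(k < n) G v L k)%N.
Proof. by []. Qed.

Lemma G_zero (v : 'I_n) (L : R) (k : nat) : (v < k)%N -> G v L k = 0%N.
Proof.
move=> hk; apply/eqP; rewrite cards_eq0; apply/eqP/setP => t.
rewrite !inE; apply/negbTE; apply/negP => /and3P[hp /eqP hl _].
have := path_last_ge hp; rewrite hl size_tuple hv1 add0n => h.
by move: (leq_trans hk h); rewrite ltnn.
Qed.

Lemma plen_cons (x z : 'I_n) (s : seq 'I_n) : plen len x (z :: s) = len x z + plen len z s.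
Proof. by rewrite /plen /= big_cons. Qed.

Lemma plen_rcons (x : 'I_n) (s : seq 'I_n) (y : 'I_n) : plen len x (rcons s y) = plen len x s + len (last x s) y.
Proof.
elim: s x => [|z s IH] x /=.
  by rewrite /plen /= big_cons big_nil addr0 add0r.
by rewrite !plen_cons IH addrA.
Qed.

Lemma G_rec (v : 'I_n) (L : R) (k : nat) : v != v1 ->
  G v L k.+1 = (\sum_(p | E p v) G p (L - len p v) k)%N.
Proof.
move=> hv; rewrite /G card_sum sum_tuple_rcons.
under [LHS]eq_bigr => t _.
  rewrite (bigD1 v) //= big1 ?addn0; last first.
    move=> x /negbTE hx; by rewrite last_rcons hx andbF.
  rewrite rcons_path last_rcons eqxx plen_rcons.
  over.
rewrite /=.
under [RHS]eq_bigr => p Ep do rewrite card_sum.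
rewrite (exchange_big_dep predT) //=.
apply: eq_bigr => t _.
case: (boolP (E (last v1 t) v)) => hE /=.
  rewrite (bigD1 (last v1 t)) ?hE //= big1 ?addn0; last first.
    by move=> p /andP[_ /negbTE hp]; rewrite eq_sym hp andbF.
  by rewrite eqxx lerBrDr; case: (path E v1 t).
case: (path E v1 t) => /=; last by rewrite big1.
rewrite big1 //= => p /andP[Ep _].
case: (eqVneq (last v1 t) p) => [hl|] //.
by move: hE; rewrite hl Ep.
Qed.
Lemma big_nat_shift m (F : nat -> nat) : (0 < m)%N ->
  (\sum_(0 <= k < m) F k = F 0%N + \sum_(0 <= k < m.-1) F k.+1)%N.
Proof. by case: m => // m _; rewrite big_nat_recl. Qed.

Lemma big_nat_last m (F : nat -> nat) : (0 < m)%N ->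
  (\sum_(0 <= k < m) F k = \sum_(0 <= k < m.-1) F k + F m.-1)%N.
Proof. by case: m => // m _; rewrite big_nat_recr. Qed.

Lemma G0 (v : 'I_n) (L : R) : G v L 0 = ((v == v1) && (0 <= L) : nat).
Proof.
rewrite /G card_sum (big_pred1 [tuple]) /=; last first.
  by move=> t; rewrite [t]tuple0 /= eqxx.
by rewrite eq_sym /plen big_nil.
Qed.

Lemma npaths_rec (v : 'I_n) (L : R) : v != v1 ->
  npaths E len v1 v L = (\sum_(p | E p v) npaths E len v1 p (L - len p v))%N.
Proof.
move=> hv; have hn : (0 < n)%N by apply: leq_ltn_trans (ltn_ord v).
rewrite npathsE -(big_mkord xpredT (fun k => G v L k)) big_nat_shift //.
rewrite G0 (negbTE hv) /= add0n.
under eq_big_nat => k _ do rewrite G_rec //.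
rewrite exchange_big /=; apply: eq_bigr => p Ep.
rewrite npathsE -(big_mkord xpredT (fun k => G p _ k)) (big_nat_last _ hn).
rewrite (@G_zero p _ n.-1) ?addn0 //.
by rewrite -ltnS prednK //; exact: leq_ltn_trans (htop Ep) (ltn_ord v).
Qed.

Lemma npaths_v1 (L : R) : npaths E len v1 v1 L = ((0 <= L)%R : nat).
Proof.
have hn : (0 < n)%N by apply: leq_ltn_trans (ltn_ord v1).
rewrite npathsE -(big_mkord xpredT (fun k => G v1 L k)) big_nat_shift //.
rewrite G0 eqxx /= big1_seq ?addn0 // => k _; apply: G_zero.
by rewrite hv1.
Qed.
End Comb.
Section Real.
Variables (R : realType) (q : R).
Hypothesis hq : 1 < q.

Lemma q_gt0 : 0 < q. Proof. exact: lt_trans hq. Qed.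
Lemma q_neq0 : q != 0. Proof. exact: lt0r_neq0 q_gt0. Qed.

Lemma powR_logq (a : R) : 0 < a -> q `^ (logq q a) = a.
Proof.
move=> ha; rewrite /powR (negbTE q_neq0) /logq divfK ?lnK //.
by rewrite gt_eqF // ln_gt0.
Qed.

Lemma powR_x (j : int) (a : R) : 0 < a -> q `^ (j%:~R + logq q a) = q ^ j * a.
Proof.
move=> ha; rewrite powRD ?q_neq0 ?implybT // powR_logq // powR_intmul //.
exact: ltW q_gt0.
Qed.

Lemma key_upper (j : int) (a : R) : 0 < a ->
  q ^ (Num.floor (j%:~R + logq q a)) <= a * q ^ j.
Proof.
move=> ha; rewrite mulrC -powR_x // -powR_intmul ?(ltW q_gt0) //.
apply: ler_powR; first exact: ltW.
by case/andP: (floor_itv (j%:~R + logq q a)).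
Qed.

Lemma key_lower (j : int) (a : R) (pi ii : nat) : 0 < a -> (pi < ii)%N ->
  a * q ^ (j - ii%:Z) <= q ^ (Num.floor (j%:~R + logq q a) - pi%:Z).
Proof.
move=> ha hpi; set fl := Num.floor _.
have h1 : a * q ^ j <= q ^ (fl + 1).
  rewrite mulrC -powR_x // -powR_intmul ?(ltW q_gt0) //.
  apply: ler_powR; first exact: ltW.
  by case/andP: (floor_itv (j%:~R + logq q a)) => _ /ltW.
have -> : fl - pi%:Z = (fl + 1) + (- (pi.+1)%:Z) by rewrite -addn1 PoszD; ring.
rewrite [X in _ <= X]expfzDr ?q_neq0 //.
have h0 : 0 <= q ^ (- (pi.+1)%:Z) by rewrite exprz_ge0 // ltW // q_gt0.
apply: le_trans (ler_wpM2r h0 h1).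
rewrite -mulrA -expfzDr ?q_neq0 //; apply: ler_wpM2l; first exact: ltW.
apply: ler_weXz2l; first exact: ltW.
by rewrite lerD2l lerN2 lez_nat.
Qed.
End Real.

Lemma lt_addE (R : realType) (x : \bar R) (c M : R) :
  (x + c%:E < M%:E)%E -> (x < (M - c)%:E)%E.
Proof.
case: x => [r| |] //= h; last exact: ltNyr.
by rewrite lte_fin ltrBrDr -lte_fin EFinD.
Qed.

Lemma le_addE (R : realType) (x : \bar R) (c M : R) :
  (x <= (M - c)%:E)%E -> (x + c%:E <= M%:E)%E.
Proof.
case: x => [r| |] //= h; last by rewrite leNye.
by rewrite -EFinD lee_fin -lerBrDr -lee_fin.
Qed.

Section Main.
Variables (R : realType) (n : nat) (E : rel 'I_n) (len : 'I_n -> 'I_n -> R).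
Hypothesis htop : forall u v : 'I_n, E u v -> (u < v)%N.
Variable v1 : 'I_n.
Hypothesis hv1 : nat_of_ord v1 = 0%N.
Variable q : R.
Hypothesis hq : 1 < q.

Lemma tab_eq m (p : 'I_n) y : (p < m)%N ->
  tau'_tab E len q m p y = tau' E len q p y.
Proof.
elim: m => // m IH hp /=; case: ifP => h; first exact: IH.
have -> : m = p by apply/eqP; rewrite eqn_leq leqNgt h -ltnS hp.
by rewrite /tau' /= ltnn.
Qed.

Lemma tau'_unfold (i : 'I_n) y :
  tau' E len q i y = tau'_step E len q (tau'_tab E len q i) i y.
Proof. by rewrite /tau' /= ltnn. Qed.

Lemma claimA (i : 'I_n) (j : int) (M : R) :
  (tau' E len q i (Some j) < M%:E)%E ->
  q ^ (j - (nat_of_ord i)%:Z) <= (npaths E len v1 i M)%:R.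
Proof.
suff: forall m (i : 'I_n), (i < m)%N -> forall j M,
  (tau' E len q i (Some j) < M%:E)%E ->
  q ^ (j - (nat_of_ord i)%:Z) <= (npaths E len v1 i M)%:R by move=> h; exact: (h i.+1).
elim=> // m IH {}i him {}j {}M.
rewrite tau'_unfold /tau'_step.
case: (eqVneq (nat_of_ord i) 0%N) => [hi0|hi0].
  have hiv : i = v1 by apply: val_inj; rewrite /= hi0 hv1.
  rewrite hi0 subr0 /=; case: ifP => hj // h0.
  rewrite hiv npaths_v1 //; move: h0; rewrite lte_fin => /ltW -> /=.
  by rewrite -(expr0z q); apply: ler_weXz2l => //; exact: ltW.
move=> /ereal_inf_lt [z [alpha [ha0 hsum ->]]].
move=> /bigmax_ltP [_ hterm].
have hiv1 : i != v1 by apply/eqP => h; move: hi0; rewrite h hv1 eqxx.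
rewrite npaths_rec // natr_sum.
have -> : q ^ (j - (nat_of_ord i)%:Z) = \sum_(p | E p i) q ^ (j - (nat_of_ord i)%:Z) * alpha p.
  by rewrite -mulr_sumr hsum mulr1.
apply: ler_sum => p Ep.
have hpi : (p < i)%N := htop Ep.
case: (eqVneq (alpha p) 0) => [->|anz]; first by rewrite mulr0.
have apos : 0 < alpha p by rewrite lt0r anz ha0.
have := hterm p Ep; rewrite (negbTE anz) tab_eq // => /lt_addE h.
rewrite ltnS in him.
apply: le_trans (IH p (leq_trans hpi him) _ _ h).
by rewrite mulrC; apply: key_lower.
Qed.

Lemma claimB (i : 'I_n) (j : int) (L : R) :
  q ^ j <= (npaths E len v1 i L)%:R -> (tau' E len q i (Some j) <= L%:E)%E.
Proof.
suff: forall m (i : 'I_n), (i < m)%N -> forall j L,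
  q ^ j <= (npaths E len v1 i L)%:R -> (tau' E len q i (Some j) <= L%:E)%E.
  by move=> h; exact: (h i.+1).
elim=> // m IH {}i him {}j {}L hN.
have qj : 0 < q ^ j by rewrite exprz_gt0 // q_gt0.
rewrite tau'_unfold /tau'_step.
case: (eqVneq (nat_of_ord i) 0%N) => [hi0|hi0].
  have hiv : i = v1 by apply: val_inj; rewrite /= hi0 hv1.
  move: hN; rewrite hiv npaths_v1 //.
  case: (leP 0 L) => hL /= hN; last by move: (lt_le_trans qj hN); rewrite ltxx.
  have -> : (j <= 0) = true.
    by rewrite -(ler_eXz2l hq) expr0z.
  by rewrite lee_fin.
have hiv1 : i != v1 by apply/eqP => h; move: hi0; rewrite h hv1 eqxx.
set Nt := npaths E len v1 i L.
have Ntp : 0 < (Nt%:R : R) by apply: lt_le_trans hN.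
have Ntn : (Nt%:R : R) != 0 by apply: lt0r_neq0.
pose alpha := fun p : 'I_n => (npaths E len v1 p (L - len p i))%:R / (Nt%:R : R).
apply: le_trans (ereal_inf_lbound _) _.
  exists alpha; split; first by move=> p _; rewrite divr_ge0.
    rewrite -mulr_suml -natr_sum -npaths_rec // -/Nt divff //.
  reflexivity.
apply/bigmax_leP; split; first by rewrite leNye.
move=> p Ep.
have hpi : (p < i)%N := htop Ep.
rewrite ltnS in him.
case: ifP => [_|/negbT anz].
  by rewrite tab_eq // tau'_unfold /= leNye.
rewrite tab_eq //; apply: le_addE.
apply: IH; first exact: leq_trans hpi him.
have apos : 0 < alpha p by rewrite lt0r anz divr_ge0.
apply: le_trans (key_upper hq _ apos) _.
apply: le_trans (ler_wpM2l (ltW apos) hN) _.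
by rewrite /alpha divfK.
Qed.
End Main.

Unset Implicit Arguments.
Set Strict Implicit.

Theorem lemma2 (R : realType) (n : nat) (hn : (0 < n)%N)
  (E : rel 'I_n) (len : 'I_n -> 'I_n -> R)
  (htop : forall u v : 'I_n, E u v -> (u < v)%N)
  (eps : R) (heps : 0 < eps) (L : R) (k : int) (a : nat) :
  let q := (1 + eps) `^ (n.+1%:R)^-1 in
  (tau' E len q (vlast hn) (Some k) <= L%:E < tau' E len q (vlast hn) (Some (k + 1)%R))%E ->
  (tau E len (vfirst hn) (vlast hn) a%:R%R <= L%:E < tau E len (vfirst hn) (vlast hn) (a.+1)%:R%R)%E ->
  (1 + eps)^-1 <= a%:R / q ^ k <= 1 + eps.
Proof.
move=> q /andP[hq1 hq2] /andP[ht1 ht2].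
have hv1 : nat_of_ord (vfirst hn) = 0%N by [].
have hvn : nat_of_ord (vlast hn) = n.-1 by [].
have he0 : 0 <= 1 + eps by rewrite addr_ge0 // ltW.
have hqn : q ^+ n.+1 = 1 + eps.
  rewrite /q -powR_mulrn ?powR_ge0 // -powRrM mulVf ?powRr1 //.
have hq : 1 < q.
  rewrite ltNge; apply/negP => hle.
  have : q ^+ n.+1 <= 1 by apply: exprn_ile1 => //; exact: powR_ge0.
  by rewrite hqn => h; lra.
have qk : 0 < q ^ k by rewrite exprz_gt0 // (lt_trans _ hq).
have hqz : 1 + eps = q ^ (n.+1)%:Z by rewrite -hqn.
apply/andP; split.
  have [L2 hL2 hL2t] : exists2 L2, L < L2 &
      (L2%:E < tau E len (vfirst hn) (vlast hn) (a.+1)%:R)%E.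
    move: ht2; case: (tau _ _ _ _ _) => [r| |] // h.
      rewrite lte_fin in h; exists ((L + r) / 2); [lra | rewrite lte_fin; lra].
    by exists (L + 1); [lra | exact: ltry].
  have hA := claimA htop hv1 hq (le_lt_trans hq1 (_ : L%:E < L2%:E)%E).
  have {}hA := hA (ltac:(by rewrite lte_fin)).
  have hNa : (npaths E len (vfirst hn) (vlast hn) L2 <= a)%N.
    rewrite leqNgt; apply/negP => hgt.
    have : (tau E len (vfirst hn) (vlast hn) (a.+1)%:R <= L2%:E)%E.
      by apply: ge_ereal_inf; exists L2%:E => //; exists L2 => //=; rewrite ler_nat.
    by move=> h; move: (le_lt_trans h hL2t); rewrite ltxx.
  rewrite ler_pdivlMr // hqz invr_expz -expfzDr ?(lt0r_neq0 (lt_trans _ hq)) //.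
  apply: le_trans (le_trans hA _); last by rewrite ler_nat.
  apply: ler_weXz2l; first exact: ltW.
  rewrite hvn addrC lerD2l lerN2 lez_nat.
  exact: leq_trans (leq_pred n) (leqnSn n).
have hup : a%:R <= q ^ (k + 1).
  rewrite leNgt; apply/negP => hlt.
  have : (tau' E len q (vlast hn) (Some (k + 1)%R) <= tau E len (vfirst hn) (vlast hn) a%:R)%E.
    apply: le_ereal_inf_tmp => _ [L' hL' <-].
    by apply: (claimB htop hv1 hq); apply: le_trans (ltW hlt) hL'.
  by move=> h; move: (le_lt_trans (le_trans h ht1) hq2); rewrite ltxx.
rewrite ler_pdivrMr //; apply: le_trans hup _.
rewrite expfzDr ?(lt0r_neq0 (lt_trans _ hq)) // expr1z mulrC ler_wpM2r ?ltW //.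
rewrite hqz -[X in X < _]expr1z ltr_eXz2l //.
Qed.
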